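(* Let $(X,\|\cdot\|)$ be a convex normed space and let $\{v_n\}_{n\in\mathbb{N}}\subset X$ be a sequence such that $\lim_{n\to\infty}\frac{v_n}{n}$ exists in $X$ and is not $0$. Then there exists $N_0$ such that $v_n\ne 0$ for $n>N_0$ and $\left\{\frac{v_n}{\|v_n\|}\right\}_{n>N_0}$ is a uniformly convex subset of $X$. Moreover, if $v_n\neq0$ for all $n\in\mathbb{N}$, then $\left\{\frac{v_n}{\|v_n\|}\right\}_{n\in\mathbb{N}}$ is a uniformly convex subset of $X$.
   Context: $\mathbb{N}=\{1,2,3,\dots\}$. A normed space $X$ is convex if for all $u,v\in X$ with $u\ne v$ and $\|u\|=\|v\|=1$ we have $\|u+v\|<2$. A subset $S\subset X$ is called uniformly convex if for every $\varepsilon>0$ there exists $\delta\in(0,1)$ such that for all $u,v\in S$ with $\|u\|=\|v\|=1$ and $\|u-v\|\ge\varepsilon$ we have $\|u+v\|\le 2-\delta$. *)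

(* Defs.v *)
From HB Require Import structures.
From mathcomp Require Import all_boot all_order all_algebra.
From mathcomp Require Import all_classical all_reals all_analysis.
Set Implicit Arguments. Unset Strict Implicit. Unset Printing Implicit Defensive.
Import Order.TTheory GRing.Theory Num.Theory.
Import numFieldNormedType.Exports.
Local Open Scope classical_set_scope.
Local Open Scope ring_scope.

Definition convex_normed_space (R : realType) (X : normedModType R) : Prop :=
  forall u v : X, u != v -> `|u| = 1 -> `|v| = 1 -> `|u + v| < 2.

Definition uniformly_convex_set (R : realType) (X : normedModType R)
  (S : set X) : Prop :=
  forall eps : R, 0 < eps ->
    exists delta : R, 0 < delta < 1 /\
      forall u v : X, S u -> S v -> `|u| = 1 -> `|v| = 1 ->
        eps <= `|u - v| -> `|u + v| <= 2 - delta.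

(* Main.v *)
Require Import Defs.
From HB Require Import structures.
From mathcomp Require Import all_boot all_order all_algebra.
From mathcomp Require Import all_classical all_reals all_analysis.
Import Order.TTheory GRing.Theory Num.Theory.
Import numFieldNormedType.Exports.
Local Open Scope classical_set_scope.
Local Open Scope ring_scope.
Set Implicit Arguments. Unset Strict Implicit. Unset Printing Implicit Defensive.

Lemma finmin (R : realType) (P : nat -> R -> Prop) N :
  (forall k d d', 0 < d' -> d' <= d -> P k d -> P k d') ->
  (forall k, (k < N)%N -> exists2 d, 0 < d & P k d) ->
  exists2 d, 0 < d & forall k, (k < N)%N -> P k d.
Proof.
move=> mono; elim: N => [|N IH] H.
  by exists 1.
have [d1 d1p H1] : exists2 d, 0 < d & forall k, (k < N)%N -> P k d.
  by apply: IH => k kN; apply: H; apply: ltnW.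
have [d2 d2p H2] := H N (ltnSn N).
exists (Num.min d1 d2); first by rewrite lt_min d1p d2p.
move=> k; rewrite ltnS leq_eqVlt => /orP [/eqP ->|kN].
  by apply: mono H2; [rewrite lt_min d1p d2p| rewrite ge_min lexx orbT].
by apply: mono (H1 k kN); [rewrite lt_min d1p d2p| rewrite ge_min lexx].
Qed.

Definition good (R : realType) (X : normedModType R) (eps d : R) (x y : X) :=
  eps <= `|x - y| -> `|x + y| <= 2 - d.

Lemma good_mono (R : realType) (X : normedModType R) (eps : R) (x y : X) (d d' : R) :
  0 < d' -> d' <= d -> good eps d x y -> good eps d' x y.
Proof.
move=> _ le H /H h; apply: le_trans h _; by rewrite lerB.
Qed.

Lemma good_sym (R : realType) (X : normedModType R) (eps d : R) (x y : X) :
  good eps d x y -> good eps d y x.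
Proof. by rewrite /good [`|y - x|]distrC [y + x]addrC. Qed.

Lemma good_pair (R : realType) (X : normedModType R) (eps : R) (x y : X) :
  (forall u v : X, u != v -> `|u| = 1 -> `|v| = 1 -> `|u + v| < 2) ->
  0 < eps -> `|x| = 1 -> `|y| = 1 -> exists2 d, 0 < d & good eps d x y.
Proof.
move=> cvx ep nx ny; have [->|xy] := eqVneq x y.
  exists 1 => //; rewrite /good subrr normr0 => h.
  by have := lt_le_trans ep h; rewrite ltxx.
exists (2 - `|x + y|); first by rewrite subr_gt0 cvx.
by move=> _; rewrite opprB addrCA subrr addr0.
Qed.
From mathcomp Require Import lra.

Section S.
Variables (R : realType) (X : normedModType R).
Variable (cvx : forall u v : X, u != v -> `|u| = 1 -> `|v| = 1 -> `|u + v| < 2).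
Variables (u : nat -> X) (w : X) (N0 : nat).
Hypothesis (nw : `|w| = 1) (nu : forall n, (N0 < n)%N -> `|u n| = 1).
Hypothesis (C : forall e : R, 0 < e -> exists K, forall n, (K <= n)%N -> `|w - u n| < e).
Variables (eps : R) (ep : 0 < eps).

Lemma per_i i : (N0 < i)%N ->
  exists2 d, 0 < d & forall j, (N0 < j)%N -> good eps d (u i) (u j).
Proof.
move=> Ni.
have [K [d0 d0p T]] : exists K, exists2 d0, 0 < d0 &
    forall j, (K <= j)%N -> (N0 < j)%N -> good eps d0 (u i) (u j).
  have [uw|uw] := eqVneq (u i) w.
    have [K HK] := C ep; exists K, 1 => // j Kj _; rewrite /good uw => h.
    by have := lt_le_trans (HK j Kj) h; rewrite ltxx.
  have cp : 0 < 2 - `|u i + w| by rewrite subr_gt0 cvx // nu.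
  have [K HK] := C (divr_gt0 cp (ltr0Sn _ 1)).
  exists K, ((2 - `|u i + w|) / 2); first by apply: divr_gt0 => //.
  move=> j Kj _ _.
  have h1 : `|u i + u j| <= `|u i + w| + `|w - u j|.
    have -> : u i + u j = (u i + w) - (w - u j) by rewrite opprB addrA addrAC addrK.
    exact: ler_normB.
  have h2 := HK j Kj.
  lra.
have [d1 d1p H1] : exists2 d, 0 < d & forall j, (j < K)%N ->
     (N0 < j)%N -> good eps d (u i) (u j).
  apply: finmin.
    by move=> k d d' d'p le H Nk; apply: good_mono d'p le (H Nk).
  move=> j _; have [Nj|] := ltnP N0 j.
    have [d dp Hd] := good_pair cvx ep (nu Ni) (nu Nj).
    by exists d.
  by move=> jN; exists 1 => // /(leq_trans jN); rewrite ltnn.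
exists (Num.min d0 d1); first by rewrite lt_min d0p d1p.
move=> j Nj; have [jK|Kj] := ltnP j K.
  by apply: good_mono (H1 j jK Nj); [rewrite lt_min d0p d1p| rewrite ge_min lexx orbT].
by apply: good_mono (T j Kj Nj); [rewrite lt_min d0p d1p| rewrite ge_min lexx].
Qed.

Lemma allpairs :
  exists2 d, 0 < d & forall i j, (N0 < i)%N -> (N0 < j)%N -> good eps d (u i) (u j).
Proof.
have [K HK] := C (divr_gt0 ep (ltr0Sn _ 1)).
have [d dp Hd] : exists2 d, 0 < d & forall i, (i < K)%N ->
   (N0 < i)%N -> forall j, (N0 < j)%N -> good eps d (u i) (u j).
  apply: finmin.
    by move=> k d d' d'p le H Nk j Nj; apply: good_mono d'p le (H Nk j Nj).
  move=> i _; have [Ni|] := ltnP N0 i.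
    have [d dp Hd] := per_i Ni.
    by exists d.
  by move=> iN; exists 1 => // /(leq_trans iN); rewrite ltnn.
exists d => // i j Ni Nj.
have [iK|Ki] := ltnP i K; first exact: Hd.
have [jK|Kj] := ltnP j K; first exact/good_sym/Hd.
move=> h.
have h1 : `|u i - u j| <= `|w - u i| + `|w - u j|.
  have -> : u i - u j = (u i - w) + (w - u j) by rewrite addrA subrK.
  by rewrite -[`|w - u i|]distrC; exact: ler_normD.
have := HK i Ki; have := HK j Kj.
lra.
Qed.
End S.

Lemma unitv (R : realType) (X : normedModType R) (x : X) : x != 0 -> `|(`|x|^-1 *: x)| = 1.
Proof.
move=> x0; rewrite normrZ normfV normr_id mulVf //.
by rewrite normr_eq0.
Qed.

Lemma uc_of (R : realType) (X : normedModType R) (u : nat -> X) (w : X) (N0 : nat) :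
  convex_normed_space X -> `|w| = 1 -> (forall n, (N0 < n)%N -> `|u n| = 1) ->
  (forall e : R, 0 < e -> exists K, forall n, (K <= n)%N -> `|w - u n| < e) ->
  uniformly_convex_set [set u n | n in [set n : nat | (N0 < n)%N]].
Proof.
move=> cvx nw nu C eps ep.
have [d dp Hd] := allpairs cvx nw nu C ep.
have hp : (0 : R) < 1/2 by lra.
exists (Num.min d (1/2)); split.
  by rewrite lt_min dp hp /= gt_min; apply/orP; right; lra.
move=> a b [i Ni <-] [j Nj <-] _ _ h.
apply: (good_mono _ _ (Hd i j Ni Nj)) => //; first by rewrite lt_min dp hp.
by rewrite ge_min lexx.
Qed.

Theorem mainTheorem8 (R : realType) (X : normedModType R) (v : nat -> X)
  (L : X) :
  convex_normed_space X ->
  (fun n : nat => (n%:R)^-1 *: v n) @ \oo --> L ->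
  L != 0 ->
  (exists N0 : nat,
     (forall n : nat, (N0 < n)%N -> v n != 0) /\
     uniformly_convex_set
       [set (`|v n|)^-1 *: v n | n in [set n : nat | (N0 < n)%N]]) /\
  ((forall n : nat, (0 < n)%N -> v n != 0) ->
   uniformly_convex_set
     [set (`|v n|)^-1 *: v n | n in [set n : nat | (0 < n)%N]]).
Proof.
move=> cvx cv L0.
set g := fun n : nat => (n%:R)^-1 *: v n.
have nL : 0 < `|L| by rewrite normr_gt0.
have cu : (fun n => `|g n|^-1 *: g n) @ \oo --> `|L|^-1 *: L.
  apply: cvgZ => //; apply: cvgV; first by rewrite normr_eq0.
  exact: cvg_norm.
have equ : forall n, (0 < n)%N -> `|g n|^-1 *: g n = `|v n|^-1 *: v n.
  move=> n n0; rewrite /g normrZ normfV ger0_norm // invfM invrK scalerA.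
  by rewrite mulrAC mulfV ?mul1r // pnatr_eq0 -lt0n.
have cu' : (fun n => `|v n|^-1 *: v n) @ \oo --> `|L|^-1 *: L.
  apply: cvg_trans cu; apply: near_eq_cvg.
  by exists 1%N => // n /= n1; rewrite equ.
have C : forall e : R, 0 < e -> exists K, forall n, (K <= n)%N ->
     `|(`|L|^-1 *: L - `|v n|^-1 *: v n)| < e.
  move=> e ep; move/cvgrPdist_lt: cu' => /(_ e ep) [K _ HK].
  by exists K => n Kn; apply: HK.
have nw := unitv L0.
split.
  move/cvgrPdist_lt: cv => /(_ _ nL) [K _ HK].
  have vnz : forall n, (K < n)%N -> v n != 0.
    move=> n Kn; apply/eqP => v0; have := HK n (ltnW Kn).
    by rewrite /= v0 scaler0 subr0 ltxx.
  exists K; split => //.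
  apply: uc_of cvx nw _ C => n Kn; exact: unitv (vnz n Kn).
move=> vnz; apply: uc_of cvx nw _ C => n Kn; exact: unitv (vnz n Kn).
Qed.
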